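(* Let $V$ be a real vector space endowed with some topology and $X$ a convex cone in $V$ with $0\in X$. Suppose $w\in\mathbb{R}$, $f\in P_X$, and $R$ is a locally nonsatiated total preorder on $X$. If $C\subseteq X$ is a convex cone in $V$ and $R$ is $C$-antichain-convex, then $$\mathcal{M}(R,B^w_{f,X})\neq\emptyset\ \Longrightarrow\ \mathcal{M}(R,B^w_{f,X})=\mathcal{M}(R^{\operatorname{co}},B^w_{f,X}).$$
   Context: A cone in $V$ is a subset $K$ with $\lambda K\subseteq K$ for all $\lambda>0$ (possibly empty, need not contain $0$). $V^*$ denotes the continuous linear functionals on $V$; $P_X=\{f\in V^*: f(x)>0\text{ for all }x\in X\setminus\{0\}\}$; $F^w_f=\{v\in V:f(v)\le w\}$, $B^w_{f,X}=F^w_f\cap X$. A set $A$ is $C$-antichain-convex iff for all $x,y\in A$, $\lambda\in[0,1]$ with $y-x\notin C\cup(-C)$, $\lambda x+(1-\lambda)y\in A$. For a relation $R\subseteq X\times X$, $R(x)=\{t\in X:(t,x)\in R\}$; $R$ is total iff for all $s,t$, $t\in R(s)$ or $s\in R(t)$; transitive iff $r\in R(s)$ and $s\in R(t)$ imply $r\in R(t)$; a total preorder is a total transitive relation; $R$ is $C$-antichain-convex iff each $R(x)$ is $C$-antichain-convex; $R$ is locally nonsatiated iff $x\in\operatorname{cl}(\{y\in X:y\in R(x),\ x\notin R(y)\})$ for all $x\in X$. The convexification $R^{\operatorname{co}}$ is the relation on $X$ with $R^{\operatorname{co}}(x)=\operatorname{co}(R(x))$. For $S\subseteq X$ and a relation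 $Q$ on $X$, $m\in S$ is $Q$-maximal on $S$ iff for every $s\in S$ with $s\in Q(m)$, $m\in Q(s)$; $\mathcal{M}(Q,S)$ is the set of these. *)

(* Defs.v *)
From HB Require Import structures.
From mathcomp Require Import all_boot all_order all_algebra.
From mathcomp Require Import all_classical all_reals topology normedtype.
Set Implicit Arguments. Unset Strict Implicit. Unset Printing Implicit Defensive.
Import Order.TTheory GRing.Theory Num.Theory numFieldNormedType.Exports.
Local Open Scope ring_scope.
Local Open Scope classical_set_scope.

Section Defs.
Variables (R : realType) (V : lmodType R).

Definition is_topology (op : set (set V)) : Prop :=
  [/\ op setT, op set0,
      (forall (I : Type) (F : I -> set V), (forall i, op (F i)) ->
          op (\bigcup_(i in setT) F i))
    & (forall A B, op A -> op B -> op (A `&` B))].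

Definition clos (op : set (set V)) (A : set V) : set V :=
  [set x | forall U, op U -> U x -> exists y, U y /\ A y].

Definition cone (K : set V) : Prop :=
  forall (l : R) x, 0 < l -> K x -> K (l *: x).

Definition convex_set (K : set V) : Prop :=
  forall x y (l : R), K x -> K y -> 0 <= l <= 1 -> K (l *: x + (1 - l) *: y).

Definition co (A : set V) : set V :=
  [set x | forall K, convex_set K -> A `<=` K -> K x].

Definition dual_elt (op : set (set V)) (f : V -> R) : Prop :=
  (forall (a : R) x y, f (a *: x + y) = a * f x + f y) /\
  (forall U : set R, open U -> op (f @^-1` U)).

Definition P_set (op : set (set V)) (X : set V) (f : V -> R) : Prop :=
  dual_elt op f /\ (forall x, X x -> x <> 0 -> 0 < f x).

Definition Bset (w : R) (f : V -> R) (X : set V) : set V :=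
  [set v | f v <= w] `&` X.

(* A relation Rel on X: Rel t x means (t, x) \in R; R(x) = {t in X | Rel t x}. *)
Definition relset (X : set V) (Rel : V -> V -> Prop) (x : V) : set V :=
  [set t | X t /\ Rel t x].

Definition rel_on (X : set V) (Rel : V -> V -> Prop) : Prop :=
  forall t x, Rel t x -> X t /\ X x.

Definition rel_total (X : set V) (Rel : V -> V -> Prop) : Prop :=
  forall s t, X s -> X t -> Rel t s \/ Rel s t.

Definition rel_trans (X : set V) (Rel : V -> V -> Prop) : Prop :=
  forall r s t, X r -> X s -> X t -> Rel r s -> Rel s t -> Rel r t.

Definition total_preorder (X : set V) (Rel : V -> V -> Prop) : Prop :=
  rel_total X Rel /\ rel_trans X Rel.

Definition antichain_convex (C A : set V) : Prop :=
  forall x y (l : R), A x -> A y -> 0 <= l <= 1 ->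
    ~ (C (y - x) \/ C (- (y - x))) -> A (l *: x + (1 - l) *: y).

Definition rel_antichain_convex (C X : set V) (Rel : V -> V -> Prop) : Prop :=
  forall x, X x -> antichain_convex C (relset X Rel x).

Definition locally_nonsatiated (op : set (set V)) (X : set V)
    (Rel : V -> V -> Prop) : Prop :=
  forall x, X x -> clos op [set y | X y /\ Rel y x /\ ~ Rel x y] x.

Definition rel_co (X : set V) (Rel : V -> V -> Prop) : V -> V -> Prop :=
  fun t x => X t /\ X x /\ co (relset X Rel x) t.

Definition maximals (X : set V) (Q : V -> V -> Prop) (S : set V) : set V :=
  [set m | S m /\ forall s, S s -> Q s m -> Q m s].

End Defs.

(* Main.v *)
Require Import Defs.
From HB Require Import structures.
From mathcomp Require Import all_boot all_order all_algebra.
From mathcomp Require Import all_classical all_reals topology normedtype.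
From mathcomp Require Import ring lra.
Import Order.TTheory GRing.Theory Num.Theory numFieldNormedType.Exports.
Local Open Scope ring_scope.
Local Open Scope classical_set_scope.

Theorem theorem15 (R : realType) (V : lmodType R) (op : set (set V))
  (Htop : is_topology op)
  (X : set V) (HXcone : cone X) (HXconv : convex_set X) (HX0 : X 0)
  (w : R) (f : V -> R) (Hf : P_set op X f)
  (Rel : V -> V -> Prop) (HRon : rel_on X Rel) (HRpre : total_preorder X Rel)
  (HRlns : locally_nonsatiated op X Rel)
  (C : set V) (HCX : C `<=` X) (HCcone : cone C) (HCconv : convex_set C)
  (HRC : rel_antichain_convex C X Rel) :
  maximals X Rel (Bset w f X) !=set0 ->
  maximals X Rel (Bset w f X) = maximals X (rel_co X Rel) (Bset w f X).
Proof.
case=> ms [[/= fms Xms] Hms].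
case: Hf => [[fl fop] fpos].
case: HRpre => Htot Htr.
have f0 : f 0 = 0.
  have := fl 1 0 0; rewrite scaler0 addr0 => h.
  move: h; rewrite mul1r; lra.
have fD x y : f (x + y) = f x + f y by rewrite -[x in LHS]scale1r fl mul1r.
have fZ (a : R) x : f (a *: x) = a * f x by rewrite -[a *: x]addr0 fl f0 addr0.
have fB x y : f (y - x) = f y - f x.
  by rewrite fD -scaleN1r fZ mulN1r.
have fcomb (l : R) x y : f (l *: x + (1 - l) *: y) = l * f x + (1 - l) * f y.
  by rewrite fD !fZ.
have Rge t : X t -> Rel t ms -> w <= f t.
  move=> Xt Rtm; rewrite leNgt; apply/negP => ftw.
  have := HRlns t Xt (f @^-1` [set r | r < w]) (fop _ (@open_lt _ w)) ftw.
  case=> y [/= fyw [Xy [Ryt nRty]]].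
  have Rym : Rel y ms by apply: Htr Ryt Rtm.
  have Rmy : Rel ms y by apply: Hms => //; split => //=; exact: ltW.
  by apply: nRty; apply: Htr Rtm Rmy.
have key m : co (relset X Rel ms) m -> f m <= w -> relset X Rel ms m.
  pose K := [set v | w < f v] `|` relset X Rel ms.
  move=> Hco fmw.
  have : K m.
    apply: Hco; last by move=> t Ht; right.
    move=> x y l Kx Ky /andP[l0 l1].
    have Kge v : K v -> w <= f v.
      by case=> [/= /ltW //|[Xv Rv]]; exact: Rge.
    have wx := Kge _ Kx; have wy := Kge _ Ky.
    have [->|ln0] := eqVneq l 0.
      by rewrite scale0r add0r subr0 scale1r.
    have [->|ln1] := eqVneq l 1.
      by rewrite scale1r subrr scale0r addr0.
    have lp : 0 < l by rewrite lt_neqAle eq_sym ln0.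
    have lq : 0 < 1 - l by rewrite subr_gt0 lt_neqAle ln1.
    have [fxw|fxw] := ltP w (f x).
      left; rewrite /= fcomb.
      have h1 : 0 < l * (f x - w) by rewrite mulr_gt0 // subr_gt0.
      have h2 : 0 <= (1 - l) * (f y - w) by rewrite mulr_ge0 // ?subr_ge0 // ltW.
      rewrite -subr_gt0 (_ : _ - w = l * (f x - w) + (1 - l) * (f y - w)); last by ring.
      exact: ltr_pwDl.
    have [fyw|fyw] := ltP w (f y).
      left; rewrite /= fcomb.
      have h1 : 0 <= l * (f x - w) by rewrite mulr_ge0 // subr_ge0.
      have h2 : 0 < (1 - l) * (f y - w) by rewrite mulr_gt0 // subr_gt0.
      rewrite -subr_gt0 (_ : _ - w = l * (f x - w) + (1 - l) * (f y - w)); last by ring.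
      exact: ltr_wpDl.
    have fxe : f x = w by apply/eqP; rewrite eq_le fxw.
    have fye : f y = w by apply/eqP; rewrite eq_le fyw.
    have Rx : relset X Rel ms x by case: Kx => //= h; move: h; rewrite fxe ltxx.
    have Ry : relset X Rel ms y by case: Ky => //= h; move: h; rewrite fye ltxx.
    have [exy|nxy] := eqVneq x y.
      by right; rewrite exy -scalerDl addrC subrK scale1r.
    right; apply: (HRC ms Xms) => //; first by rewrite l0 l1.
    have d0 : y - x != 0 by rewrite subr_eq0 eq_sym.
    case=> [Cd|Cd].
      have := fpos _ (HCX _ Cd) (elimN eqP d0).
      by rewrite fB fxe fye subrr ltxx.
    have : - (y - x) != 0 by rewrite oppr_eq0.
    move/eqP => d1.
    have := fpos _ (HCX _ Cd) d1.
    by rewrite -[- (y - x)]add0r fB f0 fB fxe fye subrr subrr ltxx.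
  by case => //= h; move: fmw; rewrite leNgt h.
rewrite eqEsubset; split => m.
- case=> [[/= fmw Xm] Hm]; split; first by split.
  move=> s [/= fsw Xs] [_ [_ Hco]]; split => //; split => //.
  move=> K _ sub; apply: sub; split => //.
  by case: (Htot m s Xm Xs) => // h; apply: Hm.
- case=> [[/= fmw Xm] Hm]; split; first by split.
  move=> s [/= fsw Xs] Rsm.
  have [//|nRms] := pselect (Rel m s).
  exfalso; apply: nRms.
  have Rmss : Rel ms s.
    by case: (Htot ms s Xms Xs) => // h; apply: Hms => //; split.
  have Rmsm : Rel ms m by apply: Htr Rmss Rsm.
  have : rel_co X Rel ms m.
    split => //; split => //; move=> K _ sub; exact: sub.
  move/(Hm ms (conj fms Xms)) => [_ [_ Hco]].
  have [_ Rmms] := key m Hco fmw.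
  exact: Htr Rmms Rmss.
Qed.
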